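(* In the setting below, with $\mathcal{S}=\{j_1<\dots<j_s\}$ and $A=(\mathrm{Id}-B_{j_s})\cdots(\mathrm{Id}-B_{j_1})$, we have $\|A\|_2<1$.
   Context: Setting: $f:\mathbb{R}^p\to\mathbb{R}$ convex, differentiable with Lipschitz gradient; $g_j:\mathbb{R}\to\mathbb{R}\cup\{+\infty\}$ proper closed convex; $x^\star$ a minimizer of $f(x)+\sum_jg_j(x_j)$; $\mathcal{S}=\{j:\partial g_j(x^\star_j)\text{ is a singleton}\}$; $g_j$ is $\mathcal{C}^2$ near $x^\star_j$ for $j\in\mathcal{S}$, $f$ is $\mathcal{C}^2$ near $x^\star$, and $\nabla^2_{\mathcal{S},\mathcal{S}}f(x^\star)\succ0$. Step sizes $0<\gamma_j\le1/L_j$, $L_j$ the coordinatewise Lipschitz constant of $\nabla_jf$. For $j\in\mathcal{S}$, $z^\star_j=x^\star_j-\gamma_j\nabla_jf(x^\star)$, $p_j>0$ the derivative of $\operatorname{prox}_{\gamma_jg_j}$ at $z^\star_j$, $u_j=\frac1{\gamma_jp_j}-\frac1{\gamma_j}$, $M=\nabla^2_{\mathcal{S},\mathcal{S}}f(x^\star)+\operatorname{diag}(u)$ (symmetric positive definite), $M^{1/2}$ its symmetric square root, and $B_j=\gamma_jp_j\,M^{1/2}_{:,j}(M^{1/2}_{:,j})^\top\in\mathbb{R}^{s\times s}$. $\|\cdot\|_2$ is the spectral norm. *)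

(* Defs.v *)
From HB Require Import structures.
From mathcomp Require Import all_boot all_order all_algebra.
From mathcomp Require Import all_classical all_reals all_analysis.
Unset Strict Implicit. Unset Printing Implicit Defensive.
Import Order.TTheory GRing.Theory Num.Theory.
Import numFieldNormedType.Exports.
Local Open Scope classical_set_scope.
Local Open Scope ring_scope.

Section Defs.
Context {R : realType}.

Definition ecoord {p : nat} (j : 'I_p) : 'rV[R]_p := delta_mx 0 j.

Definition partial {p : nat} (j : 'I_p) (f : 'rV[R]_p -> R) (x : 'rV[R]_p) : R :=
  'D_(ecoord j) f x.

Definition gradf {p : nat} (f : 'rV[R]_p -> R) (x : 'rV[R]_p) : 'rV[R]_p :=
  \row_j partial j f x.

Definition hessian {p : nat} (f : 'rV[R]_p -> R) (x : 'rV[R]_p) (j k : 'I_p) : R :=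
  partial k (partial j f) x.

Definition convex_fun {p : nat} (f : 'rV[R]_p -> R) :=
  forall (x y : 'rV[R]_p) (t : R), 0 <= t <= 1 ->
    f (t *: x + (1 - t) *: y) <= t * f x + (1 - t) * f y.

Definition lipschitz_grad {p : nat} (f : 'rV[R]_p -> R) :=
  (forall x, differentiable f x) /\
  exists L : R, forall x y, `|gradf f x - gradf f y| <= L * `|x - y|.

Definition coord_lipschitz {p : nat} (f : 'rV[R]_p -> R) (j : 'I_p) (Lj : R) :=
  forall (x : 'rV[R]_p) (h : R),
    `|partial j f (x + h *: ecoord j) - partial j f x| <= Lj * `|h|.

Definition C2_near_vec {p : nat} (f : 'rV[R]_p -> R) (x : 'rV[R]_p) :=
  \forall y \near x, forall j k : 'I_p,
    derivable (partial j f) y (ecoord k) /\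
    {for y, continuous (partial k (partial j f))}.

Definition proper_fun (g : R -> \bar R) :=
  (forall x, g x != -oo%E) /\ exists x, g x \is a fin_num.

Definition closed_fun (g : R -> \bar R) := lower_semicontinuous g.

Definition convex_efun (g : R -> \bar R) :=
  forall (x y t : R), 0 < t < 1 ->
    (g (t * x + (1 - t) * y)%R <= t%:E * g x + (1 - t)%R%:E * g y)%E.

Definition subdiff (g : R -> \bar R) (a : R) : set R :=
  [set v | forall y, (g a + (v * (y - a))%R%:E <= g y)%E].

Definition is_singleton (A : set R) := exists v, A = [set v].

Definition C2_near (h : R -> R) (a : R) :=
  \forall y \near a, derivable h y 1 /\ derivable (derive1 h) y 1 /\
                     {for y, continuous (derive1n 2 h)}.

Definition C2_near_e (g : R -> \bar R) (a : R) :=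
  (\forall y \near a, g y \is a fin_num) /\ C2_near (fine \o g) a.

Definition objective {p : nat} (f : 'rV[R]_p -> R) (g : 'I_p -> R -> \bar R)
  (x : 'rV[R]_p) : \bar R :=
  ((f x)%:E + \sum_(j < p) g j (x ord0 j))%E.

Definition prox (gam : R) (g : R -> \bar R) (z : R) : R :=
  xget 0 [set y | forall w, (g y + ((y - z) ^+ 2 / (2 * gam))%R%:E
                             <= g w + ((w - z) ^+ 2 / (2 * gam))%R%:E)%E].

(* the elements j_1 < ... < j_s of S (enum of a set of ordinals is increasing) *)
Definition sidx {p : nat} (S : {set 'I_p}) (i : 'I_#|S|) : 'I_p := enum_val i.

Definition hessS {p : nat} (f : 'rV[R]_p -> R) (x : 'rV[R]_p) (S : {set 'I_p})
  : 'M[R]_#|S| := \matrix_(a, b) hessian f x (sidx S a) (sidx S b).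

Definition posdef {n : nat} (A : 'M[R]_n) :=
  forall v : 'cV[R]_n, v != 0 -> 0 < (v^T *m A *m v) 0 0.

Definition psd {n : nat} (A : 'M[R]_n) :=
  forall v : 'cV[R]_n, 0 <= (v^T *m A *m v) 0 0.

Definition zstar {p : nat} (f : 'rV[R]_p -> R) (xs : 'rV[R]_p) (gam : 'I_p -> R)
  (j : 'I_p) : R := xs ord0 j - gam j * partial j f xs.

Definition uvec {p : nat} (gam pp : 'I_p -> R) (j : 'I_p) : R :=
  1 / (gam j * pp j) - 1 / gam j.

Definition Mmat {p : nat} (f : 'rV[R]_p -> R) (xs : 'rV[R]_p) (S : {set 'I_p})
  (gam pp : 'I_p -> R) : 'M[R]_#|S| :=
  hessS f xs S + diag_mx (\row_a uvec gam pp (sidx S a)).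

(* B_{j_k} = gam p  M^{1/2}_{:,j_k} (M^{1/2}_{:,j_k})^T, Mh = M^{1/2} *)
Definition Bmat {p : nat} (S : {set 'I_p}) (gam pp : 'I_p -> R) (Mh : 'M[R]_#|S|)
  (k : 'I_#|S|) : 'M[R]_#|S| :=
  (gam (sidx S k) * pp (sidx S k)) *: (col k Mh *m (col k Mh)^T).

(* A = (Id - B_{j_s}) ... (Id - B_{j_1}) *)
Definition Aprod {p : nat} (S : {set 'I_p}) (gam pp : 'I_p -> R) (Mh : 'M[R]_#|S|)
  : 'M[R]_#|S| :=
  foldl (fun acc k => (1%:M - Bmat S gam pp Mh k) *m acc) 1%:M (enum 'I_#|S|).

Definition norm2 {n : nat} (v : 'cV[R]_n) : R := Num.sqrt (\sum_i v i 0 ^+ 2).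

Definition spec_norm {n : nat} (A : 'M[R]_n) : R :=
  sup [set norm2 (A *m v) | v in [set v : 'cV[R]_n | norm2 v <= 1]].

End Defs.

(* Main.v *)
Require Import Defs.
From HB Require Import structures.
From mathcomp Require Import all_boot all_order all_algebra.
From mathcomp Require Import all_classical all_reals all_analysis.
From mathcomp Require Import ring lra.
Import Order.TTheory GRing.Theory Num.Theory.
Import numFieldNormedType.Exports.
Local Open Scope classical_set_scope.
Local Open Scope ring_scope.
Section MatPart.
Variable R : realType.
Variable n : nat.

Definition sqn (v : 'cV[R]_n) : R := \sum_i v i 0 ^+ 2.
Definition dotv (u v : 'cV[R]_n) : R := \sum_i u i 0 * v i 0.

Lemma sqn_ge0 v : 0 <= sqn v.
Proof. by apply: sumr_ge0 => i _; exact: sqr_ge0. Qed.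

Lemma dotvE u v : dotv u v = (u^T *m v) 0 0.
Proof. by rewrite /dotv mxE; apply: eq_bigr => i _; rewrite mxE. Qed.

Lemma step_apply (a : R) (m w : 'cV[R]_n) :
  (1%:M - a *: (m *m m^T)) *m w = w - (a * dotv m w) *: m.
Proof.
rewrite mulmxBl mul1mx -scalemxAl -mulmxA [m^T *m w]mx11_scalar mul_mx_scalar.
by rewrite scalerA -dotvE.
Qed.

Lemma step_id (a : R) (m w : 'cV[R]_n) :
  sqn ((1%:M - a *: (m *m m^T)) *m w) = sqn w - a * (2 - a * sqn m) * (dotv m w) ^+ 2.
Proof.
rewrite step_apply /sqn.
set c := a * dotv m w.
have -> : \sum_i (w - c *: m) i 0 ^+ 2 =
   \sum_i (w i 0 ^+ 2 - (2 * c) * (m i 0 * w i 0) + c ^+ 2 * m i 0 ^+ 2).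
  by apply: eq_bigr => i _; rewrite !mxE; ring.
rewrite big_split /= sumrB -!mulr_sumr -/(dotv m w) /c; ring.
Qed.

Lemma sqn_mul_le (P : 'M[R]_n) (w : 'cV[R]_n) :
  sqn (P *m w) <= (\sum_i (\sum_j `|P i j|) ^+ 2) * sqn w.
Proof.
rewrite /sqn mulr_suml; apply: ler_sum => i _.
have hw : forall j, `|w j 0| <= Num.sqrt (sqn w).
  move=> j; rewrite -sqrtr_sqr; rewrite ler_sqrt; last exact: sqn_ge0.
  rewrite /sqn (bigD1 j) //= lerDl; apply: sumr_ge0 => k _; exact: sqr_ge0.
have h1 : `|(P *m w) i 0| <= (\sum_j `|P i j|) * Num.sqrt (sqn w).
  rewrite mxE mulr_suml; apply: le_trans (ler_norm_sum _ _ _) _.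
  apply: ler_sum => j _; rewrite normrM; apply: ler_wpM2l => //.
have h0 : 0 <= (\sum_j `|P i j|) * Num.sqrt (sqn w).
  by apply: mulr_ge0 => //; apply: sumr_ge0.
have -> : (\sum_j `|P i j|) ^+ 2 * sqn w = ((\sum_j `|P i j|) * Num.sqrt (sqn w)) ^+ 2.
  by rewrite exprMn sqr_sqrtr //; exact: sqn_ge0.
by rewrite -[X in X <= _](real_normK (num_real _)) lerXn2r // nnegrE.
Qed.

End MatPart.
Arguments sqn {R n}. Arguments dotv {R n}.
Arguments sqn_ge0 {R n}.
Section TelePart.
Variable R : realType.
Variable n : nat.
Variable a : 'I_n -> R.
Variable Mh : 'M[R]_n.

Definition Fst (acc : 'M[R]_n) (k : 'I_n) :=
  (1%:M - a k *: (col k Mh *m (col k Mh)^T)) *m acc.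
Definition Pn (i : nat) := foldl Fst 1%:M (take i (enum 'I_n)).
Definition cc (k : 'I_n) := a k * (2 - a k * sqn (col k Mh)).
Definition Tt (v : 'cV[R]_n) (k : 'I_n) := cc k * dotv (col k Mh) (Pn k *m v) ^+ 2.

Lemma Pn_succ (i : nat) (Hi : (i < n)%N) :
  Pn i.+1 = (1%:M - a (Ordinal Hi) *: (col (Ordinal Hi) Mh *m (col (Ordinal Hi) Mh)^T)) *m Pn i.
Proof.
rewrite /Pn (take_nth (Ordinal Hi)) ?size_enum_ord //.
by rewrite foldl_rcons /Fst -[i in nth _ _ i]/(nat_of_ord (Ordinal Hi)) nth_ord_enum.
Qed.

Lemma tele (v : 'cV[R]_n) i : (i <= n)%N ->
  sqn (Pn i *m v) = sqn v - \sum_(k < n | (k < i)%N) Tt v k.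
Proof.
elim: i => [_|i IH Hi].
  by rewrite /Pn take0 /= mul1mx big1 ?subr0.
rewrite (@Pn_succ i Hi) -mulmxA step_id IH; last exact: ltnW.
rewrite [X in _ = _ - X](bigD1 (Ordinal Hi)); last by rewrite /= ltnSn.
have -> : \sum_(k < n | (k < i.+1)%N && (k != Ordinal Hi)) Tt v k =
          \sum_(k < n | (k < i)%N) Tt v k.
  apply: eq_bigl => k /=; rewrite ltnS leq_eqVlt.
  have -> : (k != Ordinal Hi) = (nat_of_ord k != i) by [].
  by case: (ltngtP k i).
have -> : Tt v (Ordinal Hi) = cc (Ordinal Hi) * dotv (col (Ordinal Hi) Mh) (Pn i *m v) ^+ 2 by [].
rewrite /cc.
set S := \sum_(k < n | _) _.
set X := _ * _ * _.
by rewrite opprD addrA addrAC.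
Qed.


Hypothesis symM : Mh^T = Mh.
Hypothesis posM : posdef (Mh *m Mh).
Hypothesis cpos : forall k, 0 < cc k.

Lemma Pn_fix v : (forall k : 'I_n, dotv (col k Mh) (Pn k *m v) = 0) ->
  forall i, (i <= n)%N -> Pn i *m v = v.
Proof.
move=> H; elim => [_|i IH Hi]; first by rewrite /Pn take0 /= mul1mx.
rewrite (@Pn_succ i Hi) -mulmxA IH; last exact: ltnW.
have := H (Ordinal Hi); rewrite /= IH; last exact: ltnW.
by move=> h0; rewrite step_apply h0 mulr0 scale0r subr0.
Qed.

Lemma inj_v v : (forall k : 'I_n, dotv (col k Mh) (Pn k *m v) = 0) -> v = 0.
Proof.
move=> H.
have hk : forall k : 'I_n, dotv (col k Mh) v = 0.
  by move=> k; rewrite -(H k) Pn_fix // ltnW.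
have hM : Mh *m v = 0.
  apply/matrixP => i j; rewrite (ord1 j) [RHS]mxE -(hk i) dotvE [RHS]mxE.
  rewrite -[in LHS]symM !mxE; apply: eq_bigr => l _; rewrite !mxE //.
case: (eqVneq v 0) => // hv; have := posM v hv.
by rewrite -mulmxA -mulmxA hM !mulmx0 mxE ltxx.
Qed.

Definition Nm : 'M[R]_n := \matrix_(k, j) (Num.sqrt (cc k) * ((col k Mh)^T *m Pn k) 0 j).

Lemma Nm_apply v k : (Nm *m v) k 0 = Num.sqrt (cc k) * dotv (col k Mh) (Pn k *m v).
Proof.
rewrite mxE dotvE mulmxA [in RHS]mxE mulr_sumr; apply: eq_bigr => j _.
by rewrite mxE mulrA.
Qed.

Lemma sqn_Nm v : sqn (Nm *m v) = \sum_k Tt v k.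
Proof.
apply: eq_bigr => k _; rewrite Nm_apply exprMn sqr_sqrtr //; exact: ltW.
Qed.

Lemma Nm_unit : Nm \in unitmx.
Proof.
rewrite -unitmx_tr -row_free_unit -kermx_eq0; apply/eqP/row_matrixP => i; rewrite row0.
set u := row i (kermx Nm^T).
have hu : u *m Nm^T = 0 by rewrite /u -row_mul mulmx_ker row0.
have h : Nm *m u^T = 0 by rewrite -[Nm]trmxK -trmx_mul hu trmx0.
suff : u^T = 0 by move/(congr1 trmx); rewrite trmxK trmx0.
apply: inj_v => k.
have := congr1 (fun M : 'M[R]_(n,1) => M k 0) h; rewrite Nm_apply mxE => /eqP.
rewrite mulf_eq0 => /orP[|/eqP //].
by rewrite sqrtr_eq0 leNgt cpos.
Qed.

Lemma contraction : exists c : R, (0 <= c < 1) /\ forall v, sqn (Pn n *m v) <= c * sqn v.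
Proof.
set K := \sum_i (\sum_j `|invmx Nm i j|) ^+ 2.
have K0 : 0 <= K by apply: sumr_ge0 => i _; exact: sqr_ge0.
exists (K / (K + 1)); split.
  apply/andP; split; first by apply: divr_ge0 => //; exact: addr_ge0.
  by rewrite ltr_pdivrMr ?mul1r ?ltrDl //; exact: ltr_wpDl.
move=> v.
have E : sqn (Pn n *m v) = sqn v - sqn (Nm *m v).
  rewrite tele // sqn_Nm; congr (_ - _); apply: eq_bigl => k; exact: ltn_ord.
have B : sqn v <= K * sqn (Nm *m v).
  by rewrite -{1}(mulKmx Nm_unit v); exact: sqn_mul_le.
rewrite E.
have s0 := sqn_ge0 (Nm *m v).
have x0 := sqn_ge0 v.
have K1 : 0 < K + 1 by exact: ltr_wpDl.
rewrite mulrC mulrA ler_pdivlMr //.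
move: B s0 x0 K0; move: (sqn v) (sqn (Nm *m v)) => x s.
move=> *; nra.
Qed.

End TelePart.
Arguments Pn {R n}. Arguments cc {R n}. Arguments Fst {R n}. Arguments contraction {R n a Mh}.
Lemma hess_diag_le (R : realType) (p : nat) (f : 'rV[R]_p -> R) (xs : 'rV[R]_p)
  (j : 'I_p) (Lj : R) :
  coord_lipschitz f j Lj -> derivable (partial j f) xs (ecoord j) ->
  hessian f xs j j <= Lj.
Proof.
move=> HL hd; change (derive (partial j f) xs (ecoord j) <= Lj); rewrite /derive.
apply: limr_le; first exact: hd.
near=> h.
have hn0 : h != 0 by near: h; exact: nbhs_dnbhs_neq.
rewrite /comp /shift; apply: le_trans (ler_norm _) _.
rewrite normrZ normrV ?unitfE // mulrC ler_pdivrMr ?normr_gt0 // [h *: _ + _]addrC.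
exact: HL.
Unshelve. all: by end_near.
Qed.
Section Prox.
Variable R : realType.
Variable g : R -> \bar R.
Variable gam : R.
Hypothesis gam0 : 0 < gam.
Hypothesis gprop : proper_fun g.
Hypothesis glsc : closed_fun g.
Hypothesis gconv : convex_efun g.

Definition phi (z y : R) : \bar R := (g y + ((y - z) ^+ 2 / (2 * gam))%:E)%E.
Definition argm (z y : R) := forall w, (phi z y <= phi z w)%E.

Lemma g_notninf y : g y != -oo%E.
Proof. exact: gprop.1. Qed.

Lemma argm_fin z y : argm z y -> exists r, g y = r%:E.
Proof.
move=> H; have [x0 fx0] := gprop.2; have := H x0; rewrite /phi.
case Eg: (g y) => [r| |]; first by exists r.
  by move: fx0; case: (g x0).
by move: (g_notninf y); rewrite Eg.
Qed.

Arguments argm_fin {z y}.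

Lemma argm_var z y w ry rw : argm z y -> g y = ry%:E -> g w = rw%:E ->
  ry <= rw + (y - z) * (w - y) / gam.
Proof.
move=> H Ey Ew; have g0' := gam0.
set P := (y - z) * (w - y) / gam.
set Q := (w - y) ^+ 2 / (2 * gam).
set A := (y - z) ^+ 2 / (2 * gam).
have Q0 : 0 <= Q.
  rewrite /Q; apply: divr_ge0; first exact: sqr_ge0.
  lra.
have key : forall t, 0 < t < 1 -> t * (ry - rw - P) <= t ^+ 2 * Q.
  move=> t t01.
  have c := gconv w y t t01; rewrite Ew Ey -!EFinM -EFinD in c.
  have m := H (t * w + (1 - t) * y); rewrite /phi Ey in m.
  have := le_trans m (leeD2r _ c); rewrite -!EFinD lee_fin.
  have -> : (t * w + (1 - t) * y - z) ^+ 2 / (2 * gam) = A + t * P + t ^+ 2 * Q.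
    by rewrite /A /P /Q; field; rewrite gt_eqF.
  move=> hh; rewrite -/A in hh; clearbody P Q A; nra.
set D := ry - rw - P.
suff hD : D <= 0 by rewrite /D in hD; lra.
rewrite leNgt; apply/negP => D0.
clearbody P Q A.
set t := D / (2 * (D + Q)).
have DQ : 0 < D + Q by exact: ltr_wpDr.
have t0 : 0 < t by apply: divr_gt0 => //; rewrite pmulr_rgt0.
have t1 : t < 1.
  by rewrite /t ltr_pdivrMr ?pmulr_rgt0 // mul1r; nra.
have := key t (introT andP (conj t0 t1)).
have tQ : t * Q < D.
  rewrite /t mulrAC ltr_pdivrMr ?pmulr_rgt0 //; nra.
move=> hk; rewrite -/D in hk; clearbody t D.
have : t * D < t * D by nra.
by rewrite ltxx.
Qed.


Arguments argm_var {z y w ry rw}.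

Lemma firm {z1 z2 y1 y2} : argm z1 y1 -> argm z2 y2 ->
  (y1 - y2) ^+ 2 <= (z1 - z2) * (y1 - y2).
Proof.
move=> H1 H2; have g0' := gam0.
have [r1 E1] := argm_fin H1; have [r2 E2] := argm_fin H2.
have h1 := argm_var H1 E1 E2; have h2 := argm_var H2 E2 E1.
set gi := gam^-1 in h1 h2.
have gi0 : 0 < gi by rewrite invr_gt0.
clearbody gi; nra.
Qed.

Lemma phi_lsc z : lower_semicontinuous (phi z).
Proof.
move=> y a ha; have g0' := gam0.
pose q := fun x : R => (x - z) ^+ 2 / (2 * gam).
have [e e0 he] : exists2 e, 0 < e & ((a - q y + e)%:E < g y)%E.
  move: ha; rewrite /phi; case Eg: (g y) => [r| |] ha.
  - rewrite -EFinD lte_fin in ha.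
    exists ((r + q y - a) / 2); rewrite ?lte_fin /q; lra.
  - by exists 1 => //; rewrite ltey.
  - by move: (g_notninf y); rewrite Eg.
have [V nV HV] := glsc y _ he.
have cq : q x @[x --> y] --> q y.
  have -> : q = (fun x => (x - z) * (x - z) * (2 * gam)^-1).
    by apply: funext => x; rewrite /q expr2.
  apply: cvgMl; apply: cvgM; apply: cvgB => //; exact: cvg_cst.
have qe : q y - e < q y by rewrite ltrBlDr ltrDl.
exists (V `&` [set x | q y - e < q x]).
  apply: filterI => //; exact: (cvgr_gt _ cq _ qe).
move=> x [Vx qx]; have := HV x Vx; rewrite /phi.
case: (g x) => [r| |] // gx.
  rewrite lte_fin in gx; rewrite -EFinD lte_fin; rewrite /q /= in qx gx; lra.
by rewrite addye // ltey.
Qed.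


Lemma seq_min {T : eqType} (F : T -> \bar R) (x : T) (s : seq T) :
  exists2 w, w \in x :: s & forall w', w' \in x :: s -> (F w <= F w')%E.
Proof.
elim: s => [|a s [w wm wmin]].
  exists x; first exact: mem_head.
  by move=> w'; rewrite inE => /eqP ->.
case: (leP (F a) (F w)) => h.
  exists a; first by rewrite !inE eqxx orbT.
  move=> w'; rewrite !inE => /or3P [/eqP ->|/eqP ->|hw'].
  - exact: le_trans h (wmin _ (mem_head _ _)).
  - by [].
  - by apply: le_trans h (wmin _ _); rewrite inE hw' orbT.
exists w.
  by move: wm; rewrite !inE => /orP[->|->]; rewrite ?orbT.
move=> w'; rewrite !inE => /or3P [/eqP ->|/eqP ->|hw'].
- exact: wmin (mem_head _ _).
- exact: ltW.
- by apply: wmin; rewrite inE hw' orbT.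
Qed.

Lemma argm_ex z : exists y, argm z y.
Proof.
have g0' := gam0.
have [x0 fx0] := gprop.2.
set g0 := fine (g x0).
have Eg0 : g x0 = g0%:E by rewrite fineK.
have [V nV HV] : exists2 V, nbhs x0 V & forall y, V y -> ((g0 - 1)%:E < g y)%E.
  by apply: glsc; rewrite Eg0 lte_fin; lra.
have [del del0 Hdel] := (nbhs_ballP _ _).1 nV.
have {}del0 : 0 < del := del0.
have lb : forall y r, g y = r%:E -> g0 - 1 - 2 * `|y - x0| / del <= r.
  move=> y r Ey.
  have d0 : 0 <= 2 * `|y - x0| / del.
    by apply: divr_ge0; [apply: mulr_ge0 | exact: ltW].
  case: (ltP `|y - x0| del) => hy.
    have := HV y (Hdel y _); rewrite Ey lte_fin.
    have : ball x0 del y by rewrite /ball /= distrC.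
    by move=> /[swap] /[apply] h; lra.
  set u := 2 * `|y - x0| / del.
  have u1 : 1 < u.
    rewrite /u ltr_pdivlMr // mul1r; lra.
  have u0 : 0 < u by lra.
  set t := u^-1.
  have t0 : 0 < t by rewrite invr_gt0.
  have t1 : t < 1 by rewrite invf_lt1.
  set q := t * y + (1 - t) * x0.
  have dpos : 0 < `|y - x0| by lra.
  have hq : ball x0 del q.
    rewrite /ball /=.
    have -> : x0 - q = t * (x0 - y) by rewrite /q; ring.
    rewrite normrM gtr0_norm // distrC /t /u.
    have -> : (2 * `|y - x0| / del)^-1 * `|y - x0| = del / 2.
      by field; apply/andP; split; rewrite gt_eqF.
    lra.
  have c := gconv y x0 t (introT andP (conj t0 t1)).
  rewrite Ey Eg0 -!EFinM -EFinD in c.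
  have h2 := lt_le_trans (HV q (Hdel q hq)) c.
  rewrite lte_fin in h2.
  have h3 : (g0 - r) / u < 1.
    by rewrite -/t mulrC; clearbody t; lra.
  rewrite ltr_pdivrMr // mul1r in h3.
  lra.
have [Rr HR] : exists Rr, forall y, (phi z y <= phi z x0)%E -> `|y - x0| <= Rr.
  set c0 := (x0 - z) ^+ 2 / (2 * gam).
  have c00 : 0 <= c0 by apply: divr_ge0; [exact: sqr_ge0 | lra].
  set A := 4 * gam * (c0 + 1) + 2 * (x0 - z) ^+ 2.
  set B := 8 * gam / del.
  have A0 : 0 <= A by rewrite /A; have := sqr_ge0 (x0 - z); nra.
  have B0 : 0 <= B by apply: divr_ge0; [lra | exact: ltW].
  exists (A + B + 1) => y.
  rewrite /phi Eg0.
  case Ey: (g y) => [r| |].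
  - rewrite -!EFinD lee_fin -/c0 => h.
    have hl := lb y r Ey.
    set d := `|y - x0| in hl *.
    have hq : (y - z) ^+ 2 / (2 * gam) <= c0 + 1 + 2 * d / del by lra.
    rewrite ler_pdivrMr in hq; last lra.
    have dd : d ^+ 2 <= 2 * (y - z) ^+ 2 + 2 * (x0 - z) ^+ 2.
      have -> : d ^+ 2 = (y - x0) ^+ 2 by rewrite /d real_normK // num_real.
      have := sqr_ge0 ((y - z) + (x0 - z)); nra.
    have dAB : d ^+ 2 <= A + B * d.
      rewrite /A /B; clearbody c0 d; nra.
    have d0 : 0 <= d by exact: normr_ge0.
    clearbody d A B.
    rewrite leNgt; apply/negP => hd.
    have d1 : 1 < d by lra.
    have : d ^+ 2 < d ^+ 2 by nra.
    by rewrite ltxx.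
  - by rewrite addye // leNgt ltey.
  - by move: (g_notninf y); rewrite Ey.
apply: contrapT => Hn.
have Hlt : forall y, exists w, (phi z w < phi z y)%E.
  move=> y.
  have : ~ argm z y by move=> hy; apply: Hn; exists y.
  move/existsNP => [w hw]; exists w.
  by rewrite ltNge; apply/negP.
have cK := @segment_compact R (x0 - Rr) (x0 + Rr).
rewrite compact_cover in cK.
have hopen : forall w : R, [set: R] w -> open [set y | (phi z w < phi z y)%E].
  move=> w _; case Ew: (phi z w) => [c| |].
  + exact: (lower_semicontinuousP (phi z)).1 (phi_lsc z) c.
  + have -> : [set y | (+oo < phi z y)%E] = set0.
      by apply/seteqP; split => y //=; rewrite ltNge leey.
    exact: open0.
  + by move: Ew; rewrite /phi; case: (g w) (g_notninf w).
have hcov : `[x0 - Rr, x0 + Rr] `<=` cover [set: R] (fun w : R => [set y | (phi z w < phi z y)%E]).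
  by move=> y _; have [w hw] := Hlt y; exists w.
have [D' _ HD'] := cK R setT _ hopen hcov.
have [w wm wmin] := seq_min (phi z) x0 (finmap.enum_fset D').
have wK : `|w - x0| <= Rr by apply: HR; apply: wmin; exact: mem_head.
have := HD' w; rewrite /= in_itv /= -ler_distl => /(_ wK) [w' w'D hw'].
have := wmin w'; rewrite inE w'D orbT => /(_ isT).
by rewrite leNgt hw'.
Qed.

Lemma prox_argm z : argm z (prox gam g z).
Proof. by apply: xgetPex; exact: argm_ex. Qed.

Lemma prox_deriv_le1 (z pj : R) : is_derive z (1 : R) (prox gam g) pj -> pj <= 1.
Proof.
move=> hd; rewrite -(@derive_val _ _ _ _ _ _ _ hd) /derive.
apply: limr_le; first by case: hd.
near=> h.
have hn0 : h != 0 by near: h; exact: nbhs_dnbhs_neq.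
rewrite /comp /shift.
have -> : h *: (1 : R) = h by rewrite /GRing.scale /= mulr1.
have hf := firm (prox_argm (h + z)) (prox_argm z).
rewrite addrK in hf.
move: hf; set y1 := prox gam g (h + z); set y2 := prox gam g z => hf.
rewrite /GRing.scale /=.
have -> : h^-1 * (y1 - y2) = (h * (y1 - y2)) / (h ^+ 2) by field.
have h2 : 0 < h ^+ 2 by rewrite lt0r sqrf_eq0 hn0 sqr_ge0.
rewrite ler_pdivrMr // mul1r.
have := sqr_ge0 (h - (y1 - y2)); clearbody y1 y2; nra.
Unshelve. all: by end_near.
Qed.

End Prox.
Lemma posdef_add_diag (R : realType) n (H : 'M[R]_n) (d : 'rV[R]_n) :
  posdef H -> (forall k, 0 <= d 0 k) -> posdef (H + diag_mx d).
Proof.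
move=> pH d0 v hv.
have h1 := pH v hv.
have h2 : 0 <= (v^T *m diag_mx d *m v) 0 0.
  rewrite mul_mx_diag mxE; apply: sumr_ge0 => i _; rewrite !mxE.
  by rewrite mulrAC; apply: mulr_ge0 => //; rewrite -expr2; exact: sqr_ge0.
rewrite mulmxDr mulmxDl mxE; lra.
Qed.

Theorem lemma8 (R : realType) (p : nat) (f : 'rV[R]_p -> R)
  (g : 'I_p -> R -> \bar R) (xs : 'rV[R]_p) (S : {set 'I_p})
  (L gam pp : 'I_p -> R) (Mh : 'M[R]_#|S|) :
  convex_fun f -> lipschitz_grad f ->
  (forall j, proper_fun (g j) /\ closed_fun (g j) /\ convex_efun (g j)) ->
  (forall x, (objective f g xs <= objective f g x)%E) ->
  (forall j, j \in S <-> is_singleton (subdiff (g j) (xs ord0 j))) ->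
  (forall j, j \in S -> C2_near_e (g j) (xs ord0 j)) ->
  C2_near_vec f xs ->
  posdef (hessS f xs S) ->
  (forall j, coord_lipschitz f j (L j)) ->
  (forall j, 0 < gam j /\ gam j * L j <= 1) ->
  (forall j, j \in S ->
     is_derive (zstar f xs gam j) 1 (prox (gam j) (g j)) (pp j) /\ 0 < pp j) ->
  Mh^T = Mh -> psd Mh -> Mh *m Mh = Mmat f xs S gam pp ->
  spec_norm (Aprod S gam pp Mh) < 1.
Proof.
move=> fconv flip gprops xopt hS hC2g hC2f posH HL hgam hder symM psdM hMM.
pose a := fun k : 'I_#|S| => gam (sidx S k) * pp (sidx S k).
have Aeq : Aprod S gam pp Mh = Pn a Mh #|S|.
  by rewrite /Aprod /Pn take_oversize ?size_enum_ord.
have c2 := nbhs_singleton hC2f.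
have facts : forall k : 'I_#|S|, let j := sidx S k in
    [/\ 0 < gam j, gam j * L j <= 1, 0 < pp j, pp j <= 1 &
        hessian f xs j j <= L j].
  move=> k j.
  have jS : j \in S by exact: enum_valP.
  have [g0 gL] := hgam j.
  have [hd p0] := hder j jS.
  have [gp [gl gc]] := gprops j.
  split => //.
    exact: (@prox_deriv_le1 _ _ _ g0 gp gl gc _ _ hd).
  exact: (@hess_diag_le _ _ _ _ _ _ (HL j) (c2 j j).1).
have uge0 : forall k : 'I_#|S|, 0 <= uvec gam pp (sidx S k).
  move=> k; have [g0 _ p0 p1 _] := facts k.
  rewrite /uvec.
  have -> : 1 / (gam (sidx S k) * pp (sidx S k)) - 1 / gam (sidx S k) =
            (1 - pp (sidx S k)) / (gam (sidx S k) * pp (sidx S k)).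
    by field; apply/andP; split; rewrite gt_eqF.
  apply: divr_ge0; [lra | apply: mulr_ge0; exact: ltW].
have posM : posdef (Mh *m Mh).
  rewrite hMM /Mmat; apply: posdef_add_diag => // k; rewrite mxE; exact: uge0.
have sym : forall i j, Mh i j = Mh j i by move=> i j; rewrite -{1}symM mxE.
have cpos : forall k, 0 < cc a Mh k.
  move=> k; have [g0 gL p0 p1 hL] := facts k.
  rewrite /cc.
  have -> : sqn (col k Mh) = hessian f xs (sidx S k) (sidx S k) + uvec gam pp (sidx S k).
    have -> : sqn (col k Mh) = (Mh *m Mh) k k.
      rewrite /sqn mxE; apply: eq_bigr => i _; rewrite !mxE expr2 sym //.
    by rewrite hMM /Mmat !mxE eqxx mulr1n.
  rewrite /a /uvec /=.
  move: g0 gL p0 p1 hL.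
  move: (gam (sidx S k)) (pp (sidx S k)) (L (sidx S k)) (hessian f xs (sidx S k) (sidx S k)).
  move=> G P L0 H g0 gL p0 p1 hL.
  have -> : G * P * (2 - G * P * (H + (1 / (G * P) - 1 / G))) =
            G * P * (1 + P - P * (G * H)).
    by field; apply/andP; split; rewrite gt_eqF.
  have gH : G * H <= 1 by nra.
  apply: mulr_gt0; first exact: mulr_gt0.
  nra.
have [c [c01 Hc]] := contraction symM posM cpos.
rewrite Aeq /spec_norm.
have c0 : 0 <= c by case/andP: c01.
have c1 : c < 1 by case/andP: c01.
apply: (@le_lt_trans _ _ (Num.sqrt c)); last by rewrite -sqrtr1 ltr_sqrt.
apply: ge_sup.
  exists (norm2 (Pn a Mh #|S| *m 0)); exists 0 => //.
  rewrite /= /norm2 big1 ?sqrtr0 ?ler01 // => i _; rewrite mxE expr0n.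
  by [].
move=> x [v hv <-].
apply: ler_wsqrtr.
apply: le_trans (Hc v) _.
have s0 := sqn_ge0 v.
have hs : sqn v <= 1.
  have e := sqr_sqrtr s0.
  have q0 := sqrtr_ge0 (sqn v).
  move: hv; rewrite /= /norm2 -/(sqn v) => hv.
  rewrite -e; nra.
by rewrite -[leRHS]mulr1; apply: ler_wpM2l.
Qed.
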